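(* Let $m\geq 1$ be an integer and let $G$ be a connected graph with $n$ vertices and $n-1+m$ edges. Then the minor-3-core of $G$ has at most $2(m-1)$ vertices.
   Context: Graphs are simple and undirected. A minor of $G$ is a graph obtained from $G$ by vertex contractions (contracting a vertex $u$ into a neighbour $v$, i.e. an edge contraction keeping the name $v$) and subgraph operations. A minor-3-core of $G$ is a minor $H$ of $G$ with minimum degree at least $3$ such that no minor of $G$ with minimum degree at least $3$ has more edges than $H$; all minor-3-cores of $G$ are isomorphic, so one speaks of the minor-3-core. Equivalently, it is the graph obtained by repeatedly contracting a vertex of degree at most $2$ into a neighbour and deleting isolated vertices until neither operation applies. *)

(* Defs.v *)
From mathcomp Require Import all_boot.
Set Implicit Arguments. Unset Strict Implicit. Unset Printing Implicit Defensive.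

(* A (finite, simple, undirected) graph whose vertices are named by elements
   of a finite type T: a vertex set and a set of edges, each edge being a
   2-element subset of the vertex set (see [wf_graph]). Minors of a graph on T
   are again graphs on T, since a vertex contraction keeps the name of the
   vertex contracted into. *)
Record graph (T : finType) := Graph { gV : {set T}; gE : {set {set T}} }.

Section Graphs.
Variable T : finType.
Implicit Types (G H : graph T) (u v w : T).

Definition wf_graph G : Prop :=
  forall e, e \in gE G ->
    exists x y, [/\ x != y, x \in gV G, y \in gV G & e = [set x; y]].

Definition adj G : rel T := fun x y => [set x; y] \in gE G.

Definition connected_graph G : Prop :=
  forall x y, x \in gV G -> y \in gV G -> connect (adj G) x y.

Definition deg G v : nat := #|[set e in gE G | v \in e]|.

Definition mindeg3 G : Prop := forall v, v \in gV G -> 3 <= deg G v.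

Definition del_edge G (e : {set T}) : graph T := Graph (gV G) (gE G :\ e).
Definition del_vertex G v : graph T :=
  Graph (gV G :\ v) [set e in gE G | v \notin e].

(* contract vertex u into its neighbour v (edge contraction keeping name v);
   parallel edges are merged since edges form a set *)
Definition contract G u v : graph T :=
  Graph (gV G :\ u)
        ([set e in gE G | u \notin e] :|:
         [set [set w; v] | w in [set w in gV G | adj G u w && (w != v)]]).

Inductive minor (G : graph T) : graph T -> Prop :=
| minor_refl : minor G G
| minor_del_edge H e : minor G H -> e \in gE H -> minor G (del_edge H e)
| minor_del_vertex H v : minor G H -> v \in gV H -> minor G (del_vertex H v)
| minor_contract H u v : minor G H -> u != v -> adj H u v ->
    minor G (contract H u v).

Definition minor3core G H : Prop :=
  [/\ minor G H, mindeg3 H &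
      forall H', minor G H' -> mindeg3 H' -> #|gE H'| <= #|gE H| ].
End Graphs.

(* Main.v *)
Require Import Defs.
From mathcomp Require Import all_boot.
From mathcomp Require Import zify.

Section Aux.
Variable T : finType.
Implicit Types H : graph T.

Lemma set2_inj (a b c : T) : [set a; b] = [set a; c] -> b = c.
Proof.
move=> e. have: b \in [set a; c] by rewrite -e set22.
rewrite !inE => /orP [/eqP hba | /eqP //]. subst b.
have: c \in [set a; a] by rewrite e set22.
by rewrite !inE orbb => /eqP ->.
Qed.

Lemma adj_sym H x y : adj H x y = adj H y x.
Proof.
rewrite /adj; have -> : [set x; y] = [set y; x] by apply/setP=> z; rewrite !inE orbC.
done.
Qed.

Lemma wf_adj H x y : wf_graph H -> adj H x y ->
  [/\ x \in gV H, y \in gV H & x != y].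
Proof.
move=> wf /wf [a [b [ab aV bV e]]].
have hx: x \in [set a; b] by rewrite -e set21.
have hy: y \in [set a; b] by rewrite -e set22.
have xV: x \in gV H by move: hx; rewrite !inE => /orP [] /eqP ->.
have yV: y \in gV H by move: hy; rewrite !inE => /orP [] /eqP ->.
split => //. apply/eqP => exy. subst y.
have: a \in [set x; x] by rewrite e set21.
have: b \in [set x; x] by rewrite e set22.
rewrite !inE !orbb => /eqP hb /eqP ha.
by move: ab; rewrite ha hb eqxx.
Qed.

Arguments wf_adj {H x y}.

Lemma wf_del_edge H e : wf_graph H -> wf_graph (del_edge H e).
Proof.
move=> wf f /setD1P [_ /wf] [x [y [? ? ? ?]]]; by exists x, y.
Qed.

Lemma wf_del_vertex H v : wf_graph H -> wf_graph (del_vertex H v).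
Proof.
move=> wf f; rewrite /= inE => /andP [hf vf].
have [x [y [xy xV yV ef]]] := wf f hf.
exists x, y; split => //=; rewrite !inE ?xV ?yV andbT;
  apply: contraNneq vf => <-; rewrite ef !inE eqxx ?orbT //.
Qed.

Lemma wf_contract H u v : wf_graph H -> u != v -> adj H u v ->
  wf_graph (contract H u v).
Proof.
move=> wf uv huv f; rewrite /= => /setUP [].
- rewrite inE => /andP [hf vf].
  have [x [y [xy xV yV ef]]] := wf f hf.
  exists x, y; split => //=; rewrite !inE ?xV ?yV andbT;
    apply: contraNneq vf => <-; rewrite ef !inE eqxx ?orbT //.
- case/imsetP => w; rewrite inE => /andP [wV /andP [huw wv]] ->.
  exists w, v. have [_ _ uw] := wf_adj wf huw. have [_ vV _] := wf_adj wf huv.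
  split => //; rewrite !inE ?wV ?vV andbT eq_sym //.
Qed.

Lemma card_sep (U : finType) (A : {set U}) (p : pred U) :
  #|A| = #|[set x in A | p x]| + #|[set x in A | ~~ p x]|.
Proof.
rewrite -(cardsID [set x | p x] A).
by congr (_ + _); apply: eq_card => x; rewrite !inE andbC.
Qed.

Lemma card_sum (U : finType) (A : {set U}) (p : pred U) :
  #|[set x in A | p x]| = \sum_(x in A) (p x : nat).
Proof.
rewrite -sum1_card (eq_bigl (fun x => (x \in A) && p x)); last by move=> x; rewrite inE.
rewrite big_mkcondr /=. by apply: eq_bigr => x _; case: (p x).
Qed.

Definition Pot (m : nat) H := forall (L : finType) (r : T -> L),
  (forall x y, adj H x y -> r x = r y) ->
  #|gE H| + #|r @: gV H| <= #|gV H| + m.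

Lemma econst_connect (L : finType) H (r : T -> L) x y :
  (forall a b, adj H a b -> r a = r b) -> connect (adj H) x y -> r x = r y.
Proof.
move=> hr /connectP [p]; elim: p x => [|z p IH] x /=; first by move=> _ ->.
move=> /andP [hxz hp] hy; rewrite (hr _ _ hxz); exact: IH hp hy.
Qed.

Lemma step_del_edge m H e : wf_graph H -> e \in gE H -> Pot m H ->
  Pot m (del_edge H e).
Proof.
move=> wf he hP L r' hr'.
have [x [y [xy xV yV ee]]] := wf e he.
pose f l := if l == r' y then r' x else l.
have fx z : z \in e -> f (r' z) = r' x.
  move=> hz; rewrite /f; case: ifP => // hne; move: hz;
  rewrite ee !inE => /orP [] /eqP hz; subst z => //; by rewrite eqxx in hne.
have hr : forall a b, adj H a b -> f (r' a) = f (r' b).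
  move=> a b hab. case: (eqVneq [set a; b] e) => hab'.
  - by rewrite !fx // -hab' !inE eqxx ?orbT.
  - by rewrite (hr' a b) //; rewrite /adj /= in_setD1 hab'; exact: hab.
have := hP _ (fun z => f (r' z)) hr.
have hE : #|gE (del_edge H e)| + 1 = #|gE H| by rewrite [RHS](cardsD1 e) he addnC.
have sub : r' @: gV H :\ r' y \subset [set f (r' z) | z in gV H].
  apply/subsetP => l; rewrite in_setD1 => /andP [ly /imsetP [z zV hz]].
  subst l. apply/imsetP; exists z => //. by rewrite /f (negbTE ly).
have := subset_leq_card sub.
have := leq_b1 (r' y \in r' @: gV H).
rewrite (cardsD1 (r' y) (r' @: gV H)).
change (gV (del_edge H e)) with (gV H). lia.
Qed.

Lemma step_del_vertex m H v : v \in gV H -> Pot m H -> Pot m (del_vertex H v).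
Proof.
move=> vV hP L0 r' hr'.
pose Nb := [set w | adj H v w].
pose N := r' @: Nb.
pose r z : option L0 := if z == v then None else if r' z \in N then None else Some (r' z).
have hN : forall w, adj H v w -> r w = None.
  move=> w hw; rewrite /r; have -> : r' w \in N by apply: imset_f; rewrite inE.
  by case: ifP.
have hr : forall a b, adj H a b -> r a = r b.
  move=> a b hab. case: (eqVneq a v) => [ea | av].
    subst a. by rewrite (hN b hab) /r eqxx.
  case: (eqVneq b v) => [eb | bv].
    subst b. by rewrite (hN a) ?/r ?eqxx // adj_sym.
  have h' : adj (del_vertex H v) a b.
    rewrite /adj /= inE; apply/andP; split; first exact: hab.
    rewrite !inE; apply/norP; split; rewrite eq_sym //.
  by rewrite /r (negbTE av) (negbTE bv) (hr' a b h').
have := hP _ r hr.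
have hV : #|gV (del_vertex H v)| + 1 = #|gV H|.
  by rewrite [RHS](cardsD1 v) vV addnC.
have hE : #|[set e in gE H | v \in e]| + #|gE (del_vertex H v)| = #|gE H|.
  symmetry; exact: (@card_sep _ (gE H) (fun e => v \in e)).
have hNd : #|N| <= #|[set e in gE H | v \in e]|.
  apply: leq_trans (leq_imset_card _ _) _.
  rewrite -(card_imset Nb (@set2_inj v)).
  apply: subset_leq_card. apply/subsetP => e /imsetP [w]; rewrite inE => hw ->.
  by rewrite inE set21 andbT.
set L := r' @: gV (del_vertex H v).
have hL : 1 + #|L :\: N| <= #|r @: gV H|.
  have -> : 1 + #|L :\: N| = #|None |: (Some @: (L :\: N))|.
    rewrite cardsU1 card_imset; last exact: Some_inj.
    have -> : (None \notin Some @: (L :\: N)) by apply/imsetP => [[z _]].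
    done.
  apply: subset_leq_card; apply/subsetP => l; rewrite in_setU1 =>
    /orP [/eqP -> | /imsetP [l' hl' ->]].
  - apply/imsetP; exists v => //; by rewrite /r eqxx.
  - move: hl'; rewrite inE => /andP [nN /imsetP [z zV hz]]. subst l'.
    move: zV; rewrite /= in_setD1 => /andP [zv zV].
    apply/imsetP; exists z => //. by rewrite /r (negbTE zv) (negbTE nN).
have hLN : #|L| <= #|L :\: N| + #|N|.
  rewrite -(cardsID N L) addnC leq_add2l. apply: subset_leq_card; exact: subsetIr.
lia.
Qed.

Lemma step_contract m H u v : wf_graph H -> u != v -> adj H u v -> Pot m H ->
  Pot m (contract H u v).
Proof.
move=> wf uv huv hP L r' hr'.
pose r z := if z == u then r' v else r' z.
have hu : forall b, adj H u b -> r b = r u.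
  move=> b hb. have [_ bV ub] := wf_adj wf hb.
  have bu : (b == u) = false by apply/negbTE; rewrite eq_sym.
  rewrite /r bu eqxx. case: (eqVneq b v) => [-> // | bv]. apply: hr'.
  rewrite /adj /=; apply/setUP; right. apply/imsetP; exists b => //.
  by rewrite inE bV hb bv.
have hr : forall a b, adj H a b -> r a = r b.
  move=> a b hab. case: (eqVneq a u) => [ea | au].
    subst a. by rewrite (hu b hab).
  case: (eqVneq b u) => [eb | bu].
    subst b. by rewrite (hu a) // adj_sym.
  rewrite /r (negbTE au) (negbTE bu). apply: hr'.
  rewrite /adj /=; apply/setUP; left.
  rewrite inE; apply/andP; split; first exact: hab.
  rewrite !inE (eq_sym u a) (eq_sym u b) (negbTE au) (negbTE bu) //.
have := hP _ r hr.
have [uV _ _] := wf_adj wf huv.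
have hV : #|gV (contract H u v)| + 1 = #|gV H|.
  by rewrite [RHS](cardsD1 u) uV addnC.
have hE : #|gE H| = #|[set e in gE H | u \in e]| + #|[set e in gE H | u \notin e]|
  := @card_sep _ (gE H) (fun e => u \in e).
have hE' : #|gE (contract H u v)| <=
    #|[set e in gE H | u \notin e]| + #|[set w in gV H | adj H u w && (w != v)]|.
  rewrite /=. apply: leq_trans (leq_card_setU _ _).1 _.
  rewrite leq_add2l. apply: leq_imset_card.
set W := [set w in gV H | adj H u w && (w != v)] in hE' *.
have nin : [set u; v] \notin [set [set u; w] | w in W].
  apply/imsetP => [[w]]; rewrite inE => /andP [_ /andP [_ wv]] /set2_inj ev.
  by rewrite ev eqxx in wv.
have hsub : #|[set u; v] |: [set [set u; w] | w in W]| <=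
            #|[set e in gE H | u \in e]|.
  apply: subset_leq_card; apply/subsetP => e; rewrite in_setU1 =>
    /orP [/eqP -> | /imsetP [w hw ->]]; rewrite inE ?set21 ?andbT.
  - exact: huv.
  - by move: hw; rewrite inE => /andP [_ /andP [h _]].
rewrite cardsU1 nin card_imset in hsub; last exact: set2_inj.
have hL : #|r' @: gV (contract H u v)| <= #|r @: gV H|.
  apply: subset_leq_card; apply/subsetP => l /imsetP [z]; rewrite /= in_setD1 =>
    /andP [zu zV] ->.
  apply/imsetP; exists z => //. by rewrite /r (negbTE zu).
lia.
Qed.

Lemma minor_inv m G H : minor G H -> wf_graph G -> Pot m G ->
  wf_graph H /\ Pot m H.
Proof.
move=> hm wfG PG; elim: hm => [|K e _ [wK PK] he|K w _ [wK PK] hw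
  |K u v _ [wK PK] uv huv]; split.
- exact: wfG.
- exact: PG.
- exact: wf_del_edge.
- exact: step_del_edge.
- exact: wf_del_vertex.
- exact: step_del_vertex.
- exact: wf_contract.
- exact: step_contract.
Qed.

Lemma pot_init m G : connected_graph G -> #|gE G| + 1 = #|gV G| + m -> Pot m G.
Proof.
move=> hc hs L r hr. case: (set_0Vmem (gV G)) => [eV | [x0 x0V]].
  have hV : #|gV G| = 0 by rewrite eV cards0.
  rewrite eV imset0 cards0. lia.
have : #|r @: gV G| <= 1.
  rewrite -(cards1 (r x0)). apply: subset_leq_card; apply/subsetP => l
    /imsetP [y yV ->]; rewrite inE; apply/eqP.
  symmetry; apply: (@econst_connect _ G r x0 y hr); exact: hc.
lia.
Qed.

End Aux.

Theorem lemma24 (T : finType) (G : graph T) (m : nat) :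
  1 <= m -> wf_graph G -> connected_graph G ->
  #|gE G| + 1 = #|gV G| + m ->
  forall H : graph T, minor3core G H -> #|gV H| <= 2 * (m - 1).
Proof.
move=> m1 wfG cG hs H [hm hd _].
have [wfH PH] := @minor_inv _ m G H hm wfG (@pot_init _ m G cG hs).
have := PH unit (fun _ => tt) (fun _ _ _ => erefl).
case: (set_0Vmem (gV H)) => [-> | [x0 x0V]]; first by rewrite cards0.
move=> hP'. set k := (X in _ + X <= _) in hP'.
have hL : 0 < k.
  rewrite /k; apply/card_gt0P; exists tt; apply/imsetP; by exists x0.
have h1 : 3 * #|gV H| <= \sum_(v in gV H) deg H v.
  rewrite mulnC -sum_nat_const. apply: leq_sum => v vV; exact: hd.
have h2 : \sum_(v in gV H) deg H v <= 2 * #|gE H|.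
  rewrite /deg.
  under eq_bigr => v _ do rewrite (@card_sum _ (gE H) (fun e => v \in e)).
  rewrite exchange_big /= mulnC -sum_nat_const. apply: leq_sum => e he.
  rewrite -(@card_sum _ (gV H) (fun v => v \in e)).
  have [x [y [_ _ _ ->]]] := wfH e he.
  apply: leq_trans (subset_leq_card (_ : _ \subset [set x; y])) _.
    by apply/subsetP => z; rewrite inE => /andP [].
  by rewrite cards2; case: (_ != _).
lia.
Qed.
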